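(* Let $y,z$ be nonzero complex numbers and let $u_n=u_n(y,z)$, $v_n=v_n(y,z)$ be the Lucas sequences of the first and second kind. Let $x,r\in\mathbb{C}$ and let $c,n$ be integers with $n\ge c$; if $c<0$ assume moreover $x\neq 0$. Then \[ \sum_{k=c}^n r^{n-k}x^k\big(r v_k(y,z)+(xy-2r)u_{k+1}(y,z)\big)=x^{n+1}y\,u_{n+1}(y,z)-r^{n-c+1}x^c y\,u_c(y,z) \] and \[ \sum_{k=c}^n r^{n-k}x^k\big((y^2-4z)r\,u_k(y,z)+(xy-2r)v_{k+1}(y,z)\big)=x^{n+1}y\,v_{n+1}(y,z)-r^{n-c+1}x^c y\,v_c(y,z). \]
   Context: For nonzero complex numbers $y,z$, the Lucas sequences $u_n(y,z)$ and $v_n(y,z)$ are defined by $u_0=0$, $u_1=1$, $v_0=2$, $v_1=y$ and $w_n=y\,w_{n-1}-z\,w_{n-2}$ for $n\ge 2$ (for $w=u$ and $w=v$), and extended to negative indices by $u_{-n}(y,z)=-u_n(y,z)/z^n$ and $v_{-n}(y,z)=v_n(y,z)/z^n$. *)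

(* Defs.v *)
From HB Require Import structures.
From mathcomp Require Import all_boot all_order all_algebra.
From mathcomp Require Import reals.
From mathcomp.real_closed Require Import complex.
Set Implicit Arguments. Unset Strict Implicit. Unset Printing Implicit Defensive.
Import Order.TTheory GRing.Theory Num.Theory.
Local Open Scope ring_scope.

Fixpoint lucas_pair {F : fieldType} (y z a b : F) (n : nat) : F * F :=
  match n with
  | 0 => (a, b)
  | m.+1 => let p := lucas_pair y z a b m in (p.2, y * p.2 - z * p.1)
  end.
(* lucas_rec y z a b n = w_n, where w_0 = a, w_1 = b, w_n = y w_{n-1} - z w_{n-2} *)
Definition lucas_rec {F : fieldType} (y z a b : F) (n : nat) : F :=
  (lucas_pair y z a b n).1.

Definition lucas_u_nat {F : fieldType} (y z : F) (n : nat) : F := lucas_rec y z 0 1 n.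
Definition lucas_v_nat {F : fieldType} (y z : F) (n : nat) : F := lucas_rec y z 2 y n.

(* Extension to integer indices:
   u_{-n} = - u_n / z^n,  v_{-n} = v_n / z^n. *)
Definition lucas_u {F : fieldType} (y z : F) (n : int) : F :=
  match n with
  | Posz m => lucas_u_nat y z m
  | Negz m => - lucas_u_nat y z m.+1 / z ^+ m.+1
  end.
Definition lucas_v {F : fieldType} (y z : F) (n : int) : F :=
  match n with
  | Posz m => lucas_v_nat y z m
  | Negz m => lucas_v_nat y z m.+1 / z ^+ m.+1
  end.

(* Main.v *)
Require Import Defs.
From HB Require Import structures.
From mathcomp Require Import all_boot all_order all_algebra.
From mathcomp Require Import reals.
From mathcomp.real_closed Require Import complex.
From mathcomp Require Import ring zify.
Import Order.TTheory GRing.Theory Num.Theory.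
Local Open Scope ring_scope.


Lemma pairS {F : fieldType} (y z : F) a b m : (lucas_pair y z a b m.+1).1 = (lucas_pair y z a b m).2.
Proof. by []. Qed.

Lemma recW {F : fieldType} (y z : F) a b m : lucas_rec y z a b m.+2 = y * lucas_rec y z a b m.+1 - z * lucas_rec y z a b m.
Proof. by rewrite /lucas_rec /= . Qed.

Lemma recU {F : fieldType} (y z : F) m : lucas_u_nat y z m.+2 = y * lucas_u_nat y z m.+1 - z * lucas_u_nat y z m.
Proof. exact: recW. Qed.
Lemma recV {F : fieldType} (y z : F) m : lucas_v_nat y z m.+2 = y * lucas_v_nat y z m.+1 - z * lucas_v_nat y z m.
Proof. exact: recW. Qed.
Lemma U0 {F : fieldType} (y z : F) : lucas_u_nat y z 0 = 0. Proof. by []. Qed.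
Lemma U1 {F : fieldType} (y z : F) : lucas_u_nat y z 1 = 1. Proof. by []. Qed.
Lemma V0 {F : fieldType} (y z : F) : lucas_v_nat y z 0 = 2. Proof. by []. Qed.
Lemma V1 {F : fieldType} (y z : F) : lucas_v_nat y z 1 = y. Proof. by []. Qed.

Lemma zero_rec {F : fieldType} (y z : F) (f : nat -> F) : f 0 = 0 -> f 1 = 0 ->
  (forall m, f m.+2 = y * f m.+1 - z * f m) -> forall m, f m = 0.
Proof.
move=> h0 h1 hr m.
suff : f m = 0 /\ f m.+1 = 0 by case.
elim: m => [|m [IH1 IH2]]; first by split.
by split=> //; rewrite hr IH1 IH2 !mulr0 subr0.
Qed.


Lemma idA {F : fieldType} (y z : F) m : lucas_v_nat y z m = 2 * lucas_u_nat y z m.+1 - y * lucas_u_nat y z m.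
Proof.
apply/eqP; rewrite -subr_eq0; apply/eqP; move: m.
apply: (zero_rec y z) => [|//|m]; rewrite /= ?(recU y z) ?(recV y z) ?U0 ?U1 ?V0 ?V1; ring.
Qed.

Lemma idB {F : fieldType} (y z : F) m : (y ^+ 2 - 4 * z) * lucas_u_nat y z m = 2 * lucas_v_nat y z m.+1 - y * lucas_v_nat y z m.
Proof.
apply/eqP; rewrite -subr_eq0; apply/eqP; move: m.
apply: (zero_rec y z) => [|//|m]; rewrite /= ?(recU y z) ?(recV y z) ?U0 ?U1 ?V0 ?V1; ring.
Qed.

Lemma idC {F : fieldType} (y z : F) m : lucas_v_nat y z m.+1 = y * lucas_u_nat y z m.+1 - 2 * z * lucas_u_nat y z m.
Proof.
apply/eqP; rewrite -subr_eq0; apply/eqP; move: m.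
apply: (zero_rec y z) => [|//|m]; rewrite /= ?(recU y z) ?(recV y z) ?U0 ?U1 ?V0 ?V1; ring.
Qed.

Lemma idD {F : fieldType} (y z : F) m : (y ^+ 2 - 4 * z) * lucas_u_nat y z m.+1 = y * lucas_v_nat y z m.+1 - 2 * z * lucas_v_nat y z m.
Proof.
apply/eqP; rewrite -subr_eq0; apply/eqP; move: m.
apply: (zero_rec y z) => [|//|m]; rewrite /= ?(recU y z) ?(recV y z) ?U0 ?U1 ?V0 ?V1; ring.
Qed.

Lemma Pz1 (m : nat) : (Posz m + 1 = Posz m.+1). Proof. by rewrite -addn1. Qed.
Lemma Nz0 : (Negz 0 + 1 = 0 :> int). Proof. by rewrite NegzE addNr. Qed.
Lemma NzS m : (Negz m.+1 + 1 = Negz m :> int). Proof. apply/eqP; rewrite !NegzE; lia. Qed.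

Lemma IA {F : fieldType} (y z : F) (hz : z != 0) (k : int) : lucas_v y z k = 2 * lucas_u y z (k + 1) - y * lucas_u y z k.
Proof.
case: k => [m|[|m]].
- by rewrite Pz1 /=; apply: (idA y z).
- rewrite Nz0 /= /lucas_u_nat /lucas_v_nat /lucas_rec /=. by field.
- have -> : Negz m.+1 + 1 = Negz m by exact: NzS.
  rewrite /= (idC y z). have hm : z ^+ m.+1 != 0 by rewrite expf_neq0.
  rewrite exprS. field. by rewrite hz hm.
Qed.

Lemma IB {F : fieldType} (y z : F) (hz : z != 0) (k : int) : (y ^+ 2 - 4 * z) * lucas_u y z k = 2 * lucas_v y z (k + 1) - y * lucas_v y z k.
Proof.
case: k => [m|[|m]].
- by rewrite Pz1 /=; apply: (idB y z).
- rewrite Nz0 /= /lucas_u_nat /lucas_v_nat /lucas_rec /=. by field.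
- have -> : Negz m.+1 + 1 = Negz m by exact: NzS.
  rewrite /=. have hm : z ^+ m.+1 != 0 by rewrite expf_neq0.
  transitivity (- ((y ^+ 2 - 4 * z) * lucas_u_nat y z m.+2) / z ^+ m.+2).
    by field; rewrite expf_neq0.
  rewrite (idD y z) exprS. field. by rewrite hz hm.
Qed.
Lemma tele (F : fieldType) (w g : int -> F) (y x r : F) (c n : int) (hcn : c <= n)
  (hx : c < 0 -> x != 0)
  (hg : forall k, g k = 2 * w (k+1) - y * w k) :
 \sum_(i < `|n - c|.+1) r ^ (n - (c + i%:Z)) * x ^ (c + i%:Z)
    * (r * g (c + i%:Z) + (x * y - 2 * r) * w (c + i%:Z + 1))
 = x ^ (n + 1) * y * w (n + 1) - r ^ (n - c + 1) * x ^ c * y * w c.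
Proof.
pose a := fun i : nat => r ^ (n - (c + i%:Z) + 1) * x ^ (c + i%:Z) * y * w (c + i%:Z).
rewrite (eq_bigr (fun i : 'I_ _ => a i.+1 - a i)); last first.
  move=> [i hi] _ /=.
  have hp : n - (c + i%:Z) = Posz (`|n - c| - i)%N by lia.
  set p := (`|n - c| - i)%N in hp.
  have e1 : c + (i.+1)%:Z = c + i%:Z + 1 by rewrite -addn1 PoszD addrA.
  have e2 : n - (c + i%:Z + 1) + 1 = p by rewrite -hp; ring.
  have e3 : n - (c + i%:Z) + 1 = p.+1 by rewrite hp -addn1 PoszD.
  have e4 : x ^ (c + i%:Z + 1) = x ^ (c + i%:Z) * x.
    have [x0|xn0] := eqVneq x 0.
      have hc : 0 <= c by rewrite leNgt; apply/negP => /hx; rewrite x0 eqxx.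
      have [q hq] : exists q : nat, c + i%:Z = q by exists (`|c| + i)%N; lia.
      by rewrite hq (_ : Posz q + 1 = Posz (q + 1)%N) // exprzD_nat expr1z.
    by rewrite expfzDr // expr1z.
  rewrite /a e1 e2 e3 e4 hp hg -!exprnP exprS; ring.
rewrite -(big_mkord xpredT (fun i => a i.+1 - a i)) telescope_sumr // /a.
have -> : c + (`|n - c|.+1)%:Z = n + 1.
  rewrite -addn1 PoszD gez0_abs ?subr_ge0 //; ring.
rewrite addr0 (_ : n - (n + 1) + 1 = 0); last by ring.
by rewrite expr0z mul1r.
Qed.

Local Open Scope complex_scope.

Theorem theorem1 (R : realType) (y z x r : R[i]) (c n : int)
    (hy : y != 0) (hz : z != 0) (hcn : c <= n) (hx : c < 0 -> x != 0) :
  \sum_(i < `|n - c|.+1)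
      r ^ (n - (c + i%:Z)) * x ^ (c + i%:Z)
      * (r * lucas_v y z (c + i%:Z) + (x * y - 2 * r) * lucas_u y z (c + i%:Z + 1))
    = x ^ (n + 1) * y * lucas_u y z (n + 1) - r ^ (n - c + 1) * x ^ c * y * lucas_u y z c
  /\
  \sum_(i < `|n - c|.+1)
      r ^ (n - (c + i%:Z)) * x ^ (c + i%:Z)
      * ((y ^+ 2 - 4 * z) * r * lucas_u y z (c + i%:Z)
         + (x * y - 2 * r) * lucas_v y z (c + i%:Z + 1))
    = x ^ (n + 1) * y * lucas_v y z (n + 1) - r ^ (n - c + 1) * x ^ c * y * lucas_v y z c.
Proof.
split.
  by apply: tele => // k; apply: IA.
rewrite (eq_bigr (fun i : 'I_ _ => r ^ (n - (c + i%:Z)) * x ^ (c + i%:Z)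
   * (r * ((y ^+ 2 - 4 * z) * lucas_u y z (c + i%:Z)) + (x * y - 2 * r) * lucas_v y z (c + i%:Z + 1)))); last first.
  by move=> i _; ring.
apply: (@tele _ _ (fun k => (y ^+ 2 - 4 * z) * lucas_u y z k)) => // k; exact: IB.
Qed.
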